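(* Let $n\in\mathbb{N}_{\geqslant 2}$, $k \in \{1,2,\dots ,2^n-1\}$ and $s \in \{0,1,\dots ,n-2\}$. Write $k=\sum_{i}k_i2^i$ in binary, and for $t\in\mathbb{N}_0$ define $a^k_{t},b^k_{t}\in\mathbb{N}_0$ by $k=a^k_{t}2^t+b^k_{t}$ with $0\leqslant b^k_t<2^t$. Suppose $|\psi\rangle$ is an $n$-qubit state of the form $$|\psi\rangle=\left(\sum_{l=a^k_s}^{2^{n-s}-1} c_l|l\rangle\right) \otimes |k_{s-1}k_{s-2}\dots k_{0}\rangle,$$ with $c_l\in \mathbb{C}$ (for $s=0$ the second tensor factor is absent), and assume that $c_{2a^k_{s+1}+1}=0$ if $k_s=0$ and $b^k_{s+1}\neq 0$. Then there exists a uniformly controlled gate $A$ of the form $$A=\sum_{l=0}^{2^{n-1-s}-1} |l\rangle\langle l| \otimes U_l \otimes I^{ \otimes s},$$ with single-qubit unitaries $U_l$, such that $$A|\psi\rangle=\left(\sum_{l=a^k_{s+1}}^{2^{n-(s+1)}-1} c'_l|l\rangle\right) \otimes |k_{s}k_{s-1}\dots k_{0}\rangle$$ for some $c'_l\in \mathbb{C}$, and additionally $A|i\rangle=|i\rangle$ for all $i\in\{0,1,\ldots,k-1\}$.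
   Context: Computational basis states are labelled by integers, $|b_{n-1}\dots b_0\rangle=|\sum_i b_i2^i\rangle$, with the most significant qubit first; the number of qubits of $|l\rangle$ is clear from context. The gate $A$ acts as a single-qubit unitary on the $(n-s)$th qubit (counting from the most significant), conditioned uniformly on the $n-1-s$ more significant qubits, and trivially on the $s$ least significant qubits. *)

(* Defs.v *)
From HB Require Import structures.
From mathcomp Require Import all_boot all_order all_algebra all_field.
From mathcomp Require Import spectral.
Set Implicit Arguments. Unset Strict Implicit. Unset Printing Implicit Defensive.
Import Order.TTheory GRing.Theory Num.Theory.
Local Open Scope ring_scope.

Definition acoef (k t : nat) : nat := (k %/ 2 ^ t)%N.
Definition bcoef (k t : nat) : nat := (k %% 2 ^ t)%N.
Definition kbit (k t : nat) : nat := ((k %/ 2 ^ t) %% 2)%N.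

(* The uniformly controlled gate  A = sum_l |l><l| (x) U_l (x) I^{(x) s}
   on n qubits. Index i = l*2^(s+1) + u*2^s + r (most significant first). *)
Definition ucgate (n s : nat) (U : nat -> 'M[algC]_2) : 'M[algC]_(2 ^ n) :=
  \matrix_(i, j)
    if ((i %/ 2 ^ s.+1 == j %/ 2 ^ s.+1) && (i %% 2 ^ s == j %% 2 ^ s))%N
    then U (i %/ 2 ^ s.+1)%N (inord ((i %/ 2 ^ s) %% 2)) (inord ((j %/ 2 ^ s) %% 2))
    else 0.

Definition ket (n : nat) (i : 'I_(2 ^ n)) : 'cV[algC]_(2 ^ n) := delta_mx i 0.

(* entries of (sum_{l >= a} c_l |l>) (x) |b>  where the second factor has m qubits *)
Definition prodform (a b m : nat) (c : nat -> algC) (i : nat) : algC :=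
  (if (a <= i %/ 2 ^ m)%N then c (i %/ 2 ^ m)%N else 0) *
  (if (i %% 2 ^ m == b)%N then 1 else 0).

(* Main.v *)
Require Import Defs.
From HB Require Import structures.
From mathcomp Require Import all_boot all_order all_algebra all_field.
From mathcomp Require Import spectral ring zify.
Import Order.TTheory GRing.Theory Num.Theory.
Local Open Scope ring_scope.

Definition ent (p q : algC) (u v : nat) : algC :=
  if u == 0%N then (if v == 0%N then p else q) else (if v == 0%N then - q^* else p^*).
Definition Mx (p q : algC) : 'M[algC]_2 := \matrix_(i, j) ent p q i j.

Lemma Mx_unitary p q : p * p^* + q * q^* = 1 -> Mx p q \is unitarymx.
Proof.
move=> H; apply/unitarymxP/matrixP => i j.
rewrite !mxE !big_ord_recr big_ord0 /= !mxE /ent.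
case: i => [[|[|//]] ?]; case: j => [[|[|//]] ?] /=; rewrite ?rmorphN ?conjCK.
all: rewrite add0r ?conjCK.
all: try (rewrite -H; ring).
all: rewrite -?[GRing.RMorphism.sort _ _]/(Num.conj _) ?conjCK.
all: try (rewrite -H; ring).
all: ring.
Qed.

Definition Nrm (x y : algC) : algC := sqrtC (x * x^* + y * y^*).

Definition pq (t : bool) (x y : algC) : algC * algC :=
  if ~~ t then (if y == 0 then (1, 0) else (x^* / Nrm x y, y^* / Nrm x y))
  else (if x == 0 then (1, 0) else (y / Nrm x y, - x / Nrm x y)).

Lemma Nrm_facts x y : (x != 0) || (y != 0) ->
  [/\ Nrm x y != 0, (Nrm x y)^* = Nrm x y & Nrm x y * Nrm x y = x * x^* + y * y^*].
Proof.
move=> H.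
have S0 : 0 <= x * x^* + y * y^* by rewrite -!normCK addr_ge0 ?exprn_ge0.
have SN : x * x^* + y * y^* != 0.
  rewrite -!normCK paddr_eq0 ?exprn_ge0 // !expf_eq0 /= !normr_eq0.
  by case: (x == 0) H; case: (y == 0).
split.
- by rewrite /Nrm sqrtC_eq0.
- by rewrite geC0_conj // sqrtC_ge0.
- by rewrite -expr2 sqrtCK.
Qed.

Lemma conjD_ (a b : algC) : (a / b)^* = a^* / b^*.
Proof. by rewrite rmorphM fmorphV. Qed.
Lemma conjN_ (a : algC) : (- a)^* = - a^*.
Proof. by rewrite rmorphN. Qed.

Lemma pq_norm t x y : (pq t x y).1 * (pq t x y).1^* + (pq t x y).2 * (pq t x y).2^* = 1.
Proof.
rewrite /pq; case: t => /=.
- case: eqP => [_|/eqP xn]; first by rewrite rmorph0 rmorph1 !mulr0 mulr1 addr0.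
  have [|NZ NC NN] := Nrm_facts x y; first by rewrite xn.
  rewrite /= !conjD_ NC conjN_.
  have -> : y / Nrm x y * (y^* / Nrm x y) + - x / Nrm x y * (- x^* / Nrm x y)
     = (x * x^* + y * y^*) / (Nrm x y * Nrm x y) by field.
  by rewrite NN divff // -NN mulf_neq0.
- case: eqP => [_|/eqP yn]; first by rewrite rmorph0 rmorph1 !mulr0 mulr1 addr0.
  have [|NZ NC NN] := Nrm_facts x y; first by rewrite yn orbT.
  rewrite /= !conjD_ NC ?conjN_ !conjCK.
  have -> : x^* / Nrm x y * (x / Nrm x y) + y^* / Nrm x y * (y / Nrm x y)
     = (x * x^* + y * y^*) / (Nrm x y * Nrm x y) by field.
  by rewrite NN divff // -NN mulf_neq0.
Qed.

Lemma pq_out t x y : let p := (pq t x y).1 in let q := (pq t x y).2 in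
  ent p q (~~ t) 0 * x + ent p q (~~ t) 1 * y = 0.
Proof.
rewrite /pq /ent; case: t => /=.
- case: eqP => [->|/eqP xn] /=; first by rewrite mulr0 mul0r addr0.
  have [|NZ NC NN] := Nrm_facts x y; first by rewrite xn.
  by field.
- case: eqP => [->|/eqP yn] /=; first by rewrite mulr0 rmorph0 oppr0 mul0r addr0.
  have [|NZ NC NN] := Nrm_facts x y; first by rewrite yn orbT.
  rewrite /= !conjD_ NC !conjCK. by field.
Qed.

Lemma pq_id t x y : (~~ t && (y == 0)) || (t && (x == 0)) -> pq t x y = (1, 0).
Proof. by rewrite /pq; case: t => /=; rewrite ?orbF ?andbF /= => /eqP ->; rewrite eqxx. Qed.

Lemma ent10 (u v : nat) : (u < 2)%N -> (v < 2)%N -> ent 1 0 u v = (u == v)%:R.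
Proof.
rewrite /ent; case: u => [|[|//]] _; case: v => [|[|//]] _ //=.
- by rewrite rmorph0 oppr0.
- by rewrite rmorph1.
Qed.

Section NatHelpers.
Local Open Scope nat_scope.

Lemma dec (P i : nat) : i = i %/ (P*2) * (P*2) + (i %/ P %% 2) * P + i %% P.
Proof.
rewrite divnMA {1}(divn_eq i P) {1}(divn_eq (i %/ P) 2).
set a := _ %/ 2; set b := _ %% 2; set r := i %% P. nia.
Qed.

Lemma parts (P l u r : nat) : 0 < P -> u < 2 -> r < P ->
  let j := l*(P*2)+u*P+r in
  [/\ j %/ P = l*2+u, j %% P = r, j %/ (P*2) = l & j %/ P %% 2 = u].
Proof.
move=> P0 u2 rP j.
have je : j = (l*2+u)*P + r by rewrite /j; nia.
have h1 : j %/ P = l*2+u by rewrite je divnMDl // (divn_small rP) addn0.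
have h2 : j %% P = r by rewrite je modnMDl (modn_small rP).
split => //.
- by rewrite divnMA h1 divnMDl // (divn_small u2) addn0.
- by rewrite h1 modnMDl (modn_small u2).
Qed.

Lemma dec_eq (P i j : nat) :
  (i == j) = [&& i%/(P*2) == j%/(P*2), i %/P %% 2 == j%/P%%2 & i%%P == j%%P].
Proof.
apply/eqP/and3P => [->|[/eqP e1 /eqP e2 /eqP e3]]; first by rewrite !eqxx.
by rewrite (dec P i) (dec P j) e1 e2 e3.
Qed.

Lemma uniq2 (P u r u' r' : nat) : 0 < P -> r < P -> r' < P ->
  (u*P+r == u'*P+r') = (u == u') && (r == r').
Proof.
move=> P0 rP rP'.
apply/eqP/andP => [e|[/eqP -> /eqP ->]] //.
have := congr1 (fun m => m %/ P) e; have := congr1 (fun m => m %% P) e => /=.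
rewrite !modnMDl !modn_small // => ->.
by rewrite !divnMDl // !divn_small // !addn0 => ->.
Qed.

Lemma j1lt (LP MP P r : nat) : r < P -> P*2 + LP <= MP -> LP + P + r < MP.
Proof. lia. Qed.
Lemma j10 (LP P r : nat) : 0 < P -> LP + P + r <> LP + 0 + r.
Proof. lia. Qed.
Lemma lt2 u r P : u < 2 -> r < P -> u*P + r < P*2.
Proof. nia. Qed.
Lemma flip u ks : u < 2 -> ks < 2 -> u != ks -> u = ~~ (ks == 1).
Proof. by case: u => [|[|//]]; case: ks => [|[|//]]. Qed.
Lemma lt_helper l a ks : l < a -> l*2+1 < a*2+ks.
Proof. lia. Qed.
Lemma bpos (A x y b : nat) : A + x + y < A + 0 + b -> b != 0.
Proof. lia. Qed.
Lemma bpos2 (A x b : nat) : A + x < A + b -> 0 < b.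
Proof. lia. Qed.

End NatHelpers.

Theorem lemma10 (n k s : nat) (psi : 'cV[algC]_(2 ^ n)) (c : nat -> algC) :
  (2 <= n)%N -> (0 < k < 2 ^ n)%N -> (s <= n - 2)%N ->
  (forall i : 'I_(2 ^ n), psi i 0 = prodform (acoef k s) (bcoef k s) s c i) ->
  (kbit k s = 0%N -> bcoef k s.+1 != 0%N -> c (2 * acoef k s.+1).+1 = 0) ->
  exists U : nat -> 'M[algC]_2,
    (forall l : nat, (l < 2 ^ (n - 1 - s))%N -> U l \is unitarymx) /\
    (exists c' : nat -> algC, forall i : 'I_(2 ^ n),
        (ucgate n s U *m psi) i 0 =
        prodform (acoef k s.+1) (bcoef k s.+1) s.+1 c' i) /\
    (forall i : 'I_(2 ^ n), (i < k)%N -> ucgate n s U *m ket i = ket i).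
Proof.
move=> n2 /andP[k0 kn] sn Hpsi Hc.
have Nn : (2 ^ n = 2 ^ (n - s.+1) * 2 ^ s.+1)%N by rewrite -expnD subnK //; lia.
rewrite /acoef /bcoef /kbit /prodform expnSr in Hc Hpsi Nn *.
set P := (2 ^ s)%N in Hc Hpsi Nn *.
have P0 : (0 < P)%N by rewrite expn_gt0.
set a := (k %/ (P * 2))%N; set ks := (k %/ P %% 2)%N; set b := (k %% P)%N.
have ks2 : (ks < 2)%N by rewrite ltn_pmod.
have bP : (b < P)%N by rewrite ltn_pmod.
have kdec : k = (a * (P*2) + ks * P + b)%N by apply: dec.
have [asE _ _ _] := parts P a ks b P0 ks2 bP; rewrite -kdec in asE.
have bsE : (k %% (P*2) = ks * P + b)%N.
  by rewrite {1}kdec -addnA modnMDl modn_small //; nia.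
rewrite asE bsE in Hpsi Hc *.
set X := fun l => if (a * 2 + ks <= l*2)%N then c (l*2)%N else 0.
set Y := fun l => if (a * 2 + ks <= (l*2).+1)%N then c (l*2).+1 else 0.
set t := ks == 1%N.
pose p l := (pq t (X l) (Y l)).1.
pose q l := (pq t (X l) (Y l)).2.
exists (fun l => Mx (p l) (q l)).
have ucE : forall i j : 'I_(2 ^ n), ucgate n s (fun l => Mx (p l) (q l)) i j =
    if ((i %/ (P*2) == j %/ (P*2)) && (i %% P == j %% P))%N
    then ent (p (i %/ (P*2))%N) (q (i %/ (P*2))%N) (i %/ P %% 2) (j %/ P %% 2) else 0.
  move=> i j; rewrite !mxE -/P expnSr !inordK //; exact: ltn_pmod.
split; first by move=> l _; apply: Mx_unitary; apply: pq_norm.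
split.
  exists (fun l => ent (p l) (q l) ks 0 * X l + ent (p l) (q l) ks 1 * Y l).
  move=> i.
  rewrite mxE.
  set l := (i %/ (P*2))%N; set u := (i %/ P %% 2)%N; set r := (i %% P)%N.
  have u2 : (u < 2)%N by rewrite ltn_pmod.
  have rP : (r < P)%N by rewrite ltn_pmod.
  have idec : (i = l*(P*2) + u*P + r :> nat)%N by apply: dec.
  have iN : (i < 2 ^ (n - s.+1) * (P*2))%N by rewrite -Nn.
  have lN : (l < 2 ^ (n - s.+1))%N by rewrite /l ltn_divLR // muln_gt0 P0.
  have j1N : (l*(P*2) + 1*P + r < 2^n)%N.
    have h : (l.+1 * (P*2) <= 2^(n-s.+1) * (P*2))%N by rewrite leq_mul2r lN orbT.
    rewrite Nn mul1n; move: h; rewrite mulSn.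
    exact: j1lt.
  have j0N : (l*(P*2) + 0*P + r < 2^n)%N by apply: leq_ltn_trans j1N; rewrite leq_add2r leq_add2l leq_mul2r orbT.
  pose J0 := Ordinal j0N; pose J1 := Ordinal j1N.
  have [d0 m0 l0 u0] := parts P l 0 r P0 (isT : (0<2)%N) rP.
  have [d1 m1 l1 u1] := parts P l 1 r P0 (isT : (1<2)%N) rP.
  have J10 : J1 != J0 by apply/eqP => /(congr1 val) /=; rewrite mul0n mul1n; exact: j10.
  rewrite (bigD1 J0) //= (bigD1 J1) //= big1 ?addr0; last first.
    move=> j /andP[jJ0 jJ1]; rewrite ucE; case: ifP; last by rewrite mul0r.
    move=> /andP[/eqP el /eqP er]; exfalso.
    have jdec := dec P j. have : (j %/ P %% 2 < 2)%N by rewrite ltn_pmod.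
    case: (j %/ P %% 2)%N jdec => [|[|//]] jdec _.
    - by move/eqP: jJ0; apply; apply: val_inj => /=; rewrite jdec -el -er.
    - by move/eqP: jJ1; apply; apply: val_inj => /=; rewrite jdec -el -er.
  rewrite !ucE !Hpsi /= u0 u1 l0 l1 m0 m1 d0 d1 -/l -/u -/r -/b !eqxx /= addn0 addn1.
  have imod : (i %% (P*2) = u*P + r)%N.
    by rewrite {1}idec -addnA modnMDl modn_small //; apply: lt2.
  rewrite imod uniq2 //.
  have [rb|rnb] := eqVneq r b; last by rewrite ?andbF !mulr0 addr0.
  rewrite ?andbT !mulr1.
  have [uk|ukn] := eqVneq u ks.
    rewrite ?uk ?eqxx mulr1; case: (leqP a l) => [_|la]; first by [].
    have hl := @lt_helper l a ks la.
    have hX : X l = 0 by rewrite /X ifN // -ltnNge; lia.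
    have hY : Y l = 0 by rewrite /Y ifN // -ltnNge; lia.
    rewrite -[(if _ then c (l*2)%N else 0)]/(X l) -[(if _ then c (l*2).+1 else 0)]/(Y l).
    by rewrite hX hY !mulr0 addr0.
  rewrite ?(negbTE ukn) ?andbF mulr0 (@flip u ks u2 ks2 ukn).
  exact: (pq_out t (X l) (Y l)).
move=> i ik; apply/matrixP => j z; rewrite ord1 {z}.
rewrite mxE (bigD1 i) //= big1 ?addr0; last first.
  by move=> m mi; rewrite /ket [delta_mx _ _ _ _]mxE (negbTE mi) mulr0.
rewrite /ket [delta_mx i 0 i 0]mxE [delta_mx i 0 j 0]mxE !eqxx mulr1 andbT.
have pid : pq t (X (i %/ (P*2))%N) (Y (i %/ (P*2))%N) = (1,0).
  set li := (i %/ (P*2))%N.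
  have lia : (li <= a)%N by rewrite leq_div2r // ltnW.
  apply: pq_id.
  case: (ltnP li a) => [lt|ge].
    have hl := @lt_helper li a ks lt.
    have hX : X li = 0 by rewrite /X ifN // -ltnNge; lia.
    have hY : Y li = 0 by rewrite /Y ifN // -ltnNge; lia.
    by rewrite hX hY eqxx; case: (t).
  have la : li = a by apply/eqP; rewrite eqn_leq lia ge.
  have idec : (i = li*(P*2) + (i %/ P %% 2)*P + i %% P :> nat)%N by apply: dec.
  rewrite la in idec.
  have ikk := ik; rewrite {1}kdec idec -addnA -[(a * (P * 2) + ks * P + b)%N]addnA in ikk.
  have ks01 : ks = 0%N \/ ks = 1%N by clear -ks2; lia.
  rewrite /t /X /Y la.
  case: ks01 => ksE; rewrite ksE /=.
    have bnz : (0 < b)%N by move: ikk; rewrite ksE mul0n add0n; apply: bpos2.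
    have := Hc; rewrite ksE addn0 modnMl mul0n add0n -lt0n => /(_ erefl bnz).
    by move=> h; rewrite leqnSn orbF [(a*2)%N]mulnC h eqxx.
  by rewrite ifN ?eqxx // -ltnNge; rewrite addn1 ltnSn.
have -> : (j == i) = (nat_of_ord j == nat_of_ord i) by []. rewrite ucE (dec_eq P j i).
case: ifP => [/andP[/eqP e1 /eqP e2]|hne].
  rewrite /p /q e1 pid /= ent10 ?ltn_pmod // e2 !eqxx /= andbT //.
by case: (j %/ (P*2) == _)%N hne => //=; case: (j %% P == _)%N => //= _; rewrite andbF.
Qed.
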